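(* Let $(E,(\cdot,\cdot),\mathcal H)$ be an extended affine Lie algebra with root system $R$, let $R'$ be a closed subsystem of $R$ and let $\mathcal H'$ be a cover of $R'$. Then the Lie cover $E_{R',\mathcal H'}$ (with the bracket and form of $E$) is an extended affine Lie algebra with Cartan subalgebra $\mathcal H'$ and root system $R'$ (each $\alpha\in R'$ identified with its restriction to $\mathcal H'$). In particular, $E_{R',\mathcal H}$ is an extended affine Lie algebra with root system $R'$.
   Context: All Lie algebras are over $\mathbb C$. An extended affine Lie algebra (EALA) is a triple $(E,(\cdot,\cdot),\mathcal H)$ where $E$ is a Lie algebra, $\mathcal H$ a subalgebra and $(\cdot,\cdot)$ a bilinear form on $E$ such that: (EA1) symmetric, non-degenerate, invariant form; (EA2) $\mathcal H$ finite-dimensional, $E=\bigoplus_{\alpha\in\mathcal H^*}E_\alpha$, $E_\alpha=\{x:[h,x]=\alpha(h)x\ \forall h\in\mathcal H\}$, $E_0=\mathcal H$; root system $R=\{\alpha:E_\alpha\ne0\}$; $t_\alpha\in\mathcal H$ given by $\alpha(h)=(h,t_\alpha)$, $(\alpha,\beta):=(t_\alpha,t_\beta)$, $R^\times=\{\alpha\in R:(\alpha,\alpha)\neq0\}$, $R^0=R\setminus R^\times$; (EA3) $\mathrm{ad}\,x$ locally nilpotent for $x\in E_\alpha$, $\alpha\in R^\times$; (EA4) $R$ discrete; (EA5) $R^\times$ connected (not a union of two nonempty mutually orthogonal subsets) and every $\sigma\in R^0$ non-isolated ($\alpha+\sigma\in R$ for some $\alpha\in R^\times$). Throughout the finite root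 system obtained from $R$ modulo $\mathrm{span}_{\mathbb R}R^0$ is assumed reduced. Extended affine root system (EARS): a triple $(R,(\cdot,\cdot),\mathcal V)$, $\mathcal V$ finite-dimensional real, form symmetric positive semidefinite, $R\subseteq\mathcal V$ with: $0\in R$; $R=-R$; $R$ spans $\mathcal V$; $\alpha\in R^\times\Rightarrow2\alpha\notin R$; $R$ discrete; root string property (for $\alpha\in R^\times,\beta\in R$ there are integers $d,u\ge0$ with $(\beta+\mathbb Z\alpha)\cap R=\{\beta-d\alpha,\dots,\beta+u\alpha\}$ and $2(\beta,\alpha)/(\alpha,\alpha)=d-u$); isotropic roots non-isolated; $R^\times$ connected. A subsystem of $R$ is $R'\subseteq R$ with $(R',(\cdot,\cdot)|,\mathrm{span}_{\mathbb R}R')$ an EARS; it is closed if $\alpha,\beta\in R'$, $\alpha+\beta\in R$ imply $\alpha+\beta\in R'$. A cover of a closed subsystem $R'$ is a subspace $\mathcal H'\subseteq\mathcal H$ with $t_\alpha\in\mathcal H'$ for all $\alpha\in R'^\times$ such that the form restricted to $\mathcal H'$ is non-degenerate. The Lie cover is $E_{R',\mathcal H'}:=\mathcal H'\oplus\sum_{\alpha\in R'\setminus\{0\}}E_\alpha$. *)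

(* Defs.v *)
From mathcomp Require Import all_boot all_order all_algebra.
From mathcomp Require Import reals complex.
Set Implicit Arguments.
Unset Strict Implicit.
Unset Printing Implicit Defensive.
Import Order.TTheory GRing.Theory Num.Theory.
Local Open Scope ring_scope.

(* The complex numbers are R[i] for a real-number field R : realType
   (every realType is isomorphic to the reals, so R[i] is C).
   A Lie algebra E is modelled as a subset A of an ambient C-module V
   (A = whole V for E itself; A = the Lie cover for sub-algebras),
   with bracket [br] and form [fm] on V.  The Cartan subalgebra is a
   finite-dimensional C-vector space H (a vectType) together with an
   injective linear embedding [iota : H -> V]; elements of H^* are
   functions H -> C which are linear. *)

Section EALA.
Variable (R : realType).
Local Notation C := (R[i]).
Variable (V : lmodType C) (br : V -> V -> V) (fm : V -> V -> C).
Variable (H : vectType C) (iota : H -> V).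

Definition fnl_set := (H -> C) -> Prop.

Definition is_lin_fnl (a : H -> C) : Prop :=
  forall (k : C) (h1 h2 : H), a (k *: h1 + h2) = k * a h1 + a h2.

Definition fnl0 : H -> C := fun _ => 0.
Definition fnl_add (a b : H -> C) : H -> C := fun h => a h + b h.
Definition fnl_opp (a : H -> C) : H -> C := fun h => - a h.
Definition fnl_scale (k : C) (a : H -> C) : H -> C := fun h => k * a h.

Definition weight_vec (A : V -> Prop) (a : H -> C) (x : V) : Prop :=
  A x /\ forall h : H, br (iota h) x = a h *: x.

Definition root_set (A : V -> Prop) : fnl_set :=
  fun a => is_lin_fnl a /\ exists x, weight_vec A a x /\ x <> 0.

Definition is_tvec (a : H -> C) (t : H) : Prop :=
  forall h : H, a h = fm (iota h) (iota t).

(* (alpha, beta) = (t_alpha, t_beta) has value c *)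
Definition fnl_form (a b : H -> C) (c : C) : Prop :=
  exists ta tb, is_tvec a ta /\ is_tvec b tb /\ fm (iota ta) (iota tb) = c.

Definition nonisotropic (a : H -> C) : Prop :=
  exists c, fnl_form a a c /\ c <> 0.

Definition fnl_orth (a b : H -> C) : Prop := fnl_form a b 0.

(* discreteness of a set of functionals in the (finite-dimensional)
   space H^*, using the max norm of the coordinates w.r.t. a basis of H
   (all norms on H^* give the same topology) *)
Definition discrete_set (S : fnl_set) : Prop :=
  forall a, S a -> exists eps : C, 0 < eps /\
    forall b, S b ->
      (forall i : 'I_(\dim {:H}),
         `| b (tnth (vbasis {:H}) i) - a (tnth (vbasis {:H}) i) | < eps) ->
      b = a.

Definition connected_nonisotropic (S : fnl_set) : Prop :=
  forall P Q : fnl_set,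
    (forall a, (S a /\ nonisotropic a) <-> (P a \/ Q a)) ->
    (exists a, P a) -> (exists b, Q b) ->
    ~ (forall a b, P a -> Q b -> fnl_orth a b).

Definition isotropic_nonisolated (S : fnl_set) : Prop :=
  forall s, S s -> ~ nonisotropic s ->
    exists a, S a /\ nonisotropic a /\ S (fnl_add a s).

Definition in_real_span (S : fnl_set) (v : H -> C) : Prop :=
  exists (n : nat) (a : 'I_n -> H -> C) (r : 'I_n -> C),
    (forall i, S (a i) /\ r i \is Num.real) /\
    v = (fun h => \sum_(i < n) r i * a i h).

Definition is_lie_subalgebra (A : V -> Prop) : Prop :=
  A 0 /\
  (forall (k : C) x y, A x -> A y -> A (k *: x + y)) /\
  [/\ (forall x y, A x -> A y -> A (br x y)),
      (forall (k : C) x y z, A x -> A y -> A z ->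
          br (k *: x + y) z = k *: br x z + br y z
       /\ br z (k *: x + y) = k *: br z x + br z y),
      (forall x, A x -> br x x = 0) &
      (forall x y z, A x -> A y -> A z ->
          br x (br y z) + br y (br z x) + br z (br x y) = 0)].

Definition EA1 (A : V -> Prop) : Prop :=
  [/\ (forall (k : C) x y z, A x -> A y -> A z ->
          fm (k *: x + y) z = k * fm x z + fm y z),
      (forall x y, A x -> A y -> fm x y = fm y x),
      (forall x, A x -> (forall y, A y -> fm x y = 0) -> x = 0) &
      (forall x y z, A x -> A y -> A z -> fm (br x y) z = fm x (br y z))].

Definition EA2 (A : V -> Prop) : Prop :=
  (forall (k : C) h1 h2, iota (k *: h1 + h2) = k *: iota h1 + iota h2) /\
  injective iota /\
  [/\ (forall h, A (iota h)),
      (forall h1 h2, exists h3, br (iota h1) (iota h2) = iota h3),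
      (forall x, A x -> exists (n : nat) (a : 'I_n -> H -> C) (y : 'I_n -> V),
          (forall i j, a i = a j -> i = j) /\
          (forall i, is_lin_fnl (a i) /\ weight_vec A (a i) (y i)) /\
          x = \sum_(i < n) y i),
      (forall (n : nat) (a : 'I_n -> H -> C) (y : 'I_n -> V),
          (forall i j, a i = a j -> i = j) ->
          (forall i, is_lin_fnl (a i) /\ weight_vec A (a i) (y i)) ->
          \sum_(i < n) y i = 0 -> forall i, y i = 0) &
      (forall x, weight_vec A fnl0 x <-> exists h, x = iota h)].

Definition EA3 (A : V -> Prop) : Prop :=
  forall a x, root_set A a -> nonisotropic a -> weight_vec A a x ->
    forall y, A y -> exists n : nat, iter n (br x) y = 0.

Definition EA4 (A : V -> Prop) : Prop := discrete_set (root_set A).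

Definition EA5 (A : V -> Prop) : Prop :=
  connected_nonisotropic (root_set A) /\ isotropic_nonisolated (root_set A).

Definition is_EALA (A : V -> Prop) : Prop :=
  is_lie_subalgebra A /\ EA1 A /\ [/\ EA2 A, EA3 A, EA4 A & EA5 A].

(* standing assumption: the finite root system R / span_R R^0 is reduced,
   i.e. there are no nonisotropic root_set a, b with b - 2a in span_R R^0 *)
Definition reduced_quotient (S : fnl_set) : Prop :=
  ~ exists a b, S a /\ nonisotropic a /\ S b /\ nonisotropic b /\
      in_real_span (fun s => S s /\ ~ nonisotropic s)
                   (fun h => b h - 2 * a h).

(* Extended affine root system (S, (.,.), span_R S), with the form on
   H^* transported from E via the t_alpha *)
Definition is_EARS (S : fnl_set) : Prop :=
  (forall a, S a -> is_lin_fnl a) /\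
  S fnl0 /\
  (forall a, S a -> S (fnl_opp a)) /\
  (forall a, S a -> nonisotropic a -> ~ S (fnl_scale 2 a)) /\
  discrete_set S /\
  [/\
      (forall a b c, in_real_span S a -> in_real_span S b ->
          fnl_form a b c -> c \is Num.real /\ fnl_form b a c),
      (forall a c, in_real_span S a -> fnl_form a a c -> 0 <= c),
      (forall a b, S a -> nonisotropic a -> S b ->
          exists d u : nat,
            (forall k : int,
               S (fun h => b h + k%:~R * a h) <-> (- (d%:Z) <= k <= u%:Z)%R) /\
            (forall cba caa, fnl_form b a cba -> fnl_form a a caa ->
               2 * cba / caa = d%:R - u%:R)) &
      isotropic_nonisolated S /\ connected_nonisotropic S].

Definition is_subsystem (S' S : fnl_set) : Prop :=
  (forall a, S' a -> S a) /\ is_EARS S'.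

Definition is_closed_subsystem (S' S : fnl_set) : Prop :=
  is_subsystem S' S /\
  (forall a b, S' a -> S' b -> S (fnl_add a b) -> S' (fnl_add a b)).

Definition is_cover (S' : fnl_set) (H' : {vspace H}) : Prop :=
  (forall a t, S' a -> nonisotropic a -> is_tvec a t -> t \in H') /\
  (forall h, h \in H' ->
     (forall h', h' \in H' -> fm (iota h) (iota h') = 0) -> h = 0).

End EALA.

Definition lie_cover (R : realType) (V : lmodType R[i]) (br : V -> V -> V)
  (H : vectType R[i]) (iota : H -> V) (S' : fnl_set H) (Hp : H -> Prop)
  (x : V) : Prop :=
  exists (h : H) (n : nat) (a : 'I_n -> H -> R[i]) (y : 'I_n -> V),
    Hp h /\
    (forall i, S' (a i) /\ a i <> @fnl0 R H /\
               weight_vec br iota (fun _ => True) (a i) (y i)) /\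
    x = iota h + \sum_(i < n) y i.

(* Main.v *)
Require Import Defs.
From mathcomp Require Import all_boot all_order all_algebra.
From mathcomp Require Import reals complex.
From mathcomp Require Import ring.
From Stdlib Require Import Classical FunctionalExtensionality ClassicalEpsilon.
Import Order.TTheory GRing.Theory Num.Theory.
Local Open Scope ring_scope.
Set Implicit Arguments.
Unset Strict Implicit.
Unset Printing Implicit Defensive.

Lemma widen_liftE n (k : 'I_n) : widen_ord (leqnSn n) k = lift ord_max k.
Proof. apply: val_inj; symmetry; exact: (lift_max k). Qed.

Lemma regroup (F : Type) (W : zmodType) (P : F -> W -> Prop) :
  (forall a y1 y2, P a y1 -> P a y2 -> P a (y1 + y2)) ->
  forall n (a : 'I_n -> F) (y : 'I_n -> W), (forall i, P (a i) (y i)) ->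
  exists m (a' : 'I_m -> F) (y' : 'I_m -> W),
    (forall i j, a' i = a' j -> i = j) /\ (forall i, P (a' i) (y' i)) /\
    \sum_(i < n) y i = \sum_(i < m) y' i.
Proof.
move=> Padd; elim=> [|n IH] a y Py.
  exists 0%N, a, y; split; first by case.
  by split=> // -[].
have [m [a' [y' [inj [Py' E]]]]] :=
  IH (fun i => a (widen_ord (leqnSn n) i)) (fun i => y (widen_ord (leqnSn n) i)) (fun i => Py _).
rewrite big_ord_recr /= E.
case: (classic (exists j, a' j = a ord_max)) => [[j Ej]|nE].
  exists m, a', (fun k => if k == j then y' k + y ord_max else y' k); split=> //; split.
    move=> k; case: eqP => [->|_]; last exact: Py'.
    by apply: Padd; [apply: Py'|rewrite Ej; apply: Py].
  rewrite [RHS](bigD1 j) //= eqxx [in LHS](bigD1 j) //= -!addrA; congr (_ + _); rewrite addrC.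
  idtac.
  congr (_ + _); apply: eq_bigr => k /negPf ->; done.
exists m.+1, (fun k => if unlift ord_max k is Some k' then a' k' else a ord_max),
  (fun k => if unlift ord_max k is Some k' then y' k' else y ord_max); split; last split.
- move=> i j; case: (unliftP ord_max i) => [i' ->|->]; case: (unliftP ord_max j) => [j' ->|->];
    rewrite ?unlift_none ?liftK.
  + by move/inj ->.
  + by move=> E'; exfalso; apply: nE; exists i'.
  + by move=> E'; exfalso; apply: nE; exists j'.
  + done.
- move=> k; case: (unliftP ord_max k) => [k' _|_] //.
- rewrite big_ord_recr /= unlift_none; congr (_ + _); apply: eq_bigr => k _.
  by rewrite widen_liftE liftK.
Qed.

Lemma split_l m n (i : 'I_m) : split (lshift n i) = inl i. Proof. exact: (unsplitK (inl i)). Qed.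
Lemma split_r m n (i : 'I_n) : split (rshift m i) = inr i. Proof. exact: (unsplitK (inr i)). Qed.

Definition ocons T (x0 : T) n (f : 'I_n -> T) : 'I_n.+1 -> T :=
  fun i => if unlift ord0 i is Some j then f j else x0.

Lemma ocons0 T (x0 : T) n (f : 'I_n -> T) : ocons x0 f ord0 = x0.
Proof. by rewrite /ocons unlift_none. Qed.

Lemma oconsS T (x0 : T) n (f : 'I_n -> T) j : ocons x0 f (lift ord0 j) = f j.
Proof. by rewrite /ocons liftK. Qed.

Lemma ocons_sum (W : zmodType) (x0 : W) n (f : 'I_n -> W) :
  \sum_(i < n.+1) ocons x0 f i = x0 + \sum_(i < n) f i.
Proof. by rewrite big_ord_recl ocons0; congr (_ + _); apply: eq_bigr => i _; rewrite oconsS. Qed.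

Lemma ocons_ind n (P : 'I_n.+1 -> Prop) : P ord0 -> (forall j, P (lift ord0 j)) -> forall i, P i.
Proof. by move=> h0 hS i; case: (unliftP ord0 i) => [j ->|->]. Qed.

Lemma ocons_inj T (x0 : T) n (f : 'I_n -> T) :
  (forall i j, f i = f j -> i = j) -> (forall j, f j <> x0) ->
  forall i j, ocons x0 f i = ocons x0 f j -> i = j.
Proof.
move=> inj nx i j; case: (unliftP ord0 i) => [i' ->|->]; case: (unliftP ord0 j) => [j' ->|->];
  rewrite ?ocons0 ?oconsS //.
- by move/inj ->.
- by move=> e; exfalso; apply: (nx i').
- by move=> e; exfalso; apply: (nx j'); rewrite e.
Qed.

Section Lin.
Variable K : fieldType.

Lemma linf0 (U U' : lmodType K) (f : U -> U')
  (hf : forall k x y, f (k *: x + y) = k *: f x + f y) : f 0 = 0.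
Proof.
have h := hf 1 0 0; rewrite !scale1r addr0 in h.
by apply: (addrI (f 0)); rewrite addr0 -h.
Qed.

Lemma linfD (U U' : lmodType K) (f : U -> U')
  (hf : forall k x y, f (k *: x + y) = k *: f x + f y) x y : f (x + y) = f x + f y.
Proof. by have := hf 1 x y; rewrite !scale1r. Qed.

Lemma linfZ (U U' : lmodType K) (f : U -> U')
  (hf : forall k x y, f (k *: x + y) = k *: f x + f y) k x : f (k *: x) = k *: f x.
Proof. by have := hf k x 0; rewrite !addr0 (linf0 hf) addr0. Qed.

Lemma linfN (U U' : lmodType K) (f : U -> U')
  (hf : forall k x y, f (k *: x + y) = k *: f x + f y) x : f (- x) = - f x.
Proof. by rewrite -scaleN1r (linfZ hf) scaleN1r. Qed.

Lemma linfB (U U' : lmodType K) (f : U -> U')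
  (hf : forall k x y, f (k *: x + y) = k *: f x + f y) x y : f (x - y) = f x - f y.
Proof. by rewrite (linfD hf) (linfN hf). Qed.

Lemma linf_sum (U U' : lmodType K) (f : U -> U')
  (hf : forall k x y, f (k *: x + y) = k *: f x + f y) n (x : 'I_n -> U) :
  f (\sum_(i < n) x i) = \sum_(i < n) f (x i).
Proof. apply: (big_morph f (linfD hf) (linf0 hf)). Qed.

Lemma fnl0E (U : lmodType K) (f : U -> K)
  (hf : forall k x y, f (k *: x + y) = k * f x + f y) : f 0 = 0.
Proof.
have h := hf 1 0 0; rewrite scale1r mul1r addr0 in h.
by apply: (addrI (f 0)); rewrite addr0 -h.
Qed.

Lemma fnlD (U : lmodType K) (f : U -> K)
  (hf : forall k x y, f (k *: x + y) = k * f x + f y) x y : f (x + y) = f x + f y.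
Proof. by have := hf 1 x y; rewrite scale1r mul1r. Qed.

Lemma fnlZ (U : lmodType K) (f : U -> K)
  (hf : forall k x y, f (k *: x + y) = k * f x + f y) k x : f (k *: x) = k * f x.
Proof. by have := hf k x 0; rewrite !addr0 (fnl0E hf) addr0. Qed.

Lemma fnlN (U : lmodType K) (f : U -> K)
  (hf : forall k x y, f (k *: x + y) = k * f x + f y) x : f (- x) = - f x.
Proof. by rewrite -scaleN1r (fnlZ hf) mulN1r. Qed.

Lemma fnlB (U : lmodType K) (f : U -> K)
  (hf : forall k x y, f (k *: x + y) = k * f x + f y) x y : f (x - y) = f x - f y.
Proof. by rewrite (fnlD hf) (fnlN hf). Qed.

Lemma fnl_sum (U : lmodType K) (f : U -> K)
  (hf : forall k x y, f (k *: x + y) = k * f x + f y) I (r : seq I) (P : pred I) (x : I -> U) :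
  f (\sum_(i <- r | P i) x i) = \sum_(i <- r | P i) f (x i).
Proof. apply: (big_morph f (fnlD hf) (fnl0E hf)). Qed.

End Lin.

Section EFacts.
Variable R : realType.
Local Notation C := R[i].
Variables (V : lmodType C) (br : V -> V -> V) (fm : V -> V -> C).
Variables (H : vectType C) (iota : H -> V).
Hypothesis hE : is_EALA br fm iota (fun _ : V => True).
Local Notation A0 := (fun _ : V => True).
Local Notation WV := (weight_vec br iota A0).

Lemma br_linl k x y z : br (k *: x + y) z = k *: br x z + br y z.
Proof. by case: hE => [[_ [_ [_ bil _ _]]] _]; case: (bil k x y z). Qed.
Lemma br_linr k x y z : br z (k *: x + y) = k *: br z x + br z y.
Proof. by case: hE => [[_ [_ [_ bil _ _]]] _]; case: (bil k x y z). Qed.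
Lemma brxx x : br x x = 0.
Proof. by case: hE => [[_ [_ [_ _ h _]]] _]; apply: h. Qed.
Lemma jacobi x y z : br x (br y z) + br y (br z x) + br z (br x y) = 0.
Proof. by case: hE => [[_ [_ [_ _ _ h]]] _]; apply: h. Qed.

Lemma br0l z : br 0 z = 0. Proof. exact: (linf0 (fun k x y => br_linl k x y z)). Qed.
Lemma br0r z : br z 0 = 0. Proof. exact: (linf0 (fun k x y => br_linr k x y z)). Qed.
Lemma brDl x y z : br (x + y) z = br x z + br y z. Proof. exact: (linfD (fun k x y => br_linl k x y z)). Qed.
Lemma brDr x y z : br z (x + y) = br z x + br z y. Proof. exact: (linfD (fun k x y => br_linr k x y z)). Qed.
Lemma brZl k x z : br (k *: x) z = k *: br x z. Proof. exact: (linfZ (fun k x y => br_linl k x y z)). Qed.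
Lemma brZr k x z : br z (k *: x) = k *: br z x. Proof. exact: (linfZ (fun k x y => br_linr k x y z)). Qed.
Lemma brNl x z : br (- x) z = - br x z. Proof. exact: (linfN (fun k x y => br_linl k x y z)). Qed.
Lemma brNr x z : br z (- x) = - br z x. Proof. exact: (linfN (fun k x y => br_linr k x y z)). Qed.
Lemma br_suml n (x : 'I_n -> V) z : br (\sum_(i < n) x i) z = \sum_(i < n) br (x i) z.
Proof. exact: (linf_sum (fun k x y => br_linl k x y z)). Qed.
Lemma br_sumr n (x : 'I_n -> V) z : br z (\sum_(i < n) x i) = \sum_(i < n) br z (x i).
Proof. exact: (linf_sum (fun k x y => br_linr k x y z)). Qed.
Lemma br_anti x y : br x y = - br y x.
Proof.
have := brxx (x + y); rewrite brDl !brDr !brxx add0r addr0 => /eqP.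
by rewrite addr_eq0 => /eqP.
Qed.

Lemma fm_linl k x y z : fm (k *: x + y) z = k * fm x z + fm y z.
Proof. by case: hE => [_ [[h _ _ _] _]]; apply: h. Qed.
Lemma fmC x y : fm x y = fm y x.
Proof. by case: hE => [_ [[_ h _ _] _]]; apply: h. Qed.
Lemma fm_nondeg x : (forall y, fm x y = 0) -> x = 0.
Proof. by case: hE => [_ [[_ _ h _] _]] hx; apply: h. Qed.
Lemma fm_inv x y z : fm (br x y) z = fm x (br y z).
Proof. by case: hE => [_ [[_ _ _ h] _]]; apply: h. Qed.
Lemma fm_linr k x y z : fm z (k *: x + y) = k * fm z x + fm z y.
Proof. by rewrite fmC fm_linl (fmC x) (fmC y). Qed.

Lemma fm0l z : fm 0 z = 0. Proof. exact: (fnl0E (fun k x y => fm_linl k x y z)). Qed.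
Lemma fm0r z : fm z 0 = 0. Proof. exact: (fnl0E (fun k x y => fm_linr k x y z)). Qed.
Lemma fmDl x y z : fm (x + y) z = fm x z + fm y z. Proof. exact: (fnlD (fun k x y => fm_linl k x y z)). Qed.
Lemma fmDr x y z : fm z (x + y) = fm z x + fm z y. Proof. exact: (fnlD (fun k x y => fm_linr k x y z)). Qed.
Lemma fmZl k x z : fm (k *: x) z = k * fm x z. Proof. exact: (fnlZ (fun k x y => fm_linl k x y z)). Qed.
Lemma fmZr k x z : fm z (k *: x) = k * fm z x. Proof. exact: (fnlZ (fun k x y => fm_linr k x y z)). Qed.
Lemma fmNl x z : fm (- x) z = - fm x z. Proof. exact: (fnlN (fun k x y => fm_linl k x y z)). Qed.
Lemma fmNr x z : fm z (- x) = - fm z x. Proof. exact: (fnlN (fun k x y => fm_linr k x y z)). Qed.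
Lemma fmBl x y z : fm (x - y) z = fm x z - fm y z. Proof. exact: (fnlB (fun k x y => fm_linl k x y z)). Qed.
Lemma fmBr x y z : fm z (x - y) = fm z x - fm z y. Proof. exact: (fnlB (fun k x y => fm_linr k x y z)). Qed.
Lemma fm_suml I (r : seq I) (P : pred I) (x : I -> V) z :
  fm (\sum_(i <- r | P i) x i) z = \sum_(i <- r | P i) fm (x i) z.
Proof. exact: (fnl_sum (fun k x y => fm_linl k x y z)). Qed.
Lemma fm_sumr I (r : seq I) (P : pred I) (x : I -> V) z :
  fm z (\sum_(i <- r | P i) x i) = \sum_(i <- r | P i) fm z (x i).
Proof. exact: (fnl_sum (fun k x y => fm_linr k x y z)). Qed.

Lemma io_lin k h1 h2 : iota (k *: h1 + h2) = k *: iota h1 + iota h2.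
Proof. by case: hE => [_ [_ [[h _] _ _ _]]]; apply: h. Qed.
Lemma io_inj : injective iota.
Proof. by case: hE => [_ [_ [[_ [h _]] _ _ _]]]. Qed.
Lemma io0 : iota 0 = 0. Proof. exact: (linf0 io_lin). Qed.
Lemma ioD x y : iota (x + y) = iota x + iota y. Proof. exact: (linfD io_lin). Qed.
Lemma ioZ k x : iota (k *: x) = k *: iota x. Proof. exact: (linfZ io_lin). Qed.
Lemma ioN x : iota (- x) = - iota x. Proof. exact: (linfN io_lin). Qed.
Lemma ioB x y : iota (x - y) = iota x - iota y. Proof. exact: (linfB io_lin). Qed.
Lemma io_sum n (x : 'I_n -> H) : iota (\sum_(i < n) x i) = \sum_(i < n) iota (x i).
Proof. exact: (linf_sum io_lin). Qed.
Lemma io_eq0 h : (iota h = 0) -> h = 0.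
Proof. by rewrite -io0 => /io_inj. Qed.

Lemma E_decomp x : exists (n : nat) (a : 'I_n -> H -> C) (y : 'I_n -> V),
          (forall i j, a i = a j -> i = j) /\
          (forall i, is_lin_fnl (a i) /\ WV (a i) (y i)) /\
          x = \sum_(i < n) y i.
Proof. by case: hE => [_ [_ [[_ [_ [_ _ h _ _]]] _ _ _]]]; apply: h. Qed.

Lemma E_indep (n : nat) (a : 'I_n -> H -> C) (y : 'I_n -> V) :
          (forall i j, a i = a j -> i = j) ->
          (forall i, is_lin_fnl (a i) /\ WV (a i) (y i)) ->
          \sum_(i < n) y i = 0 -> forall i, y i = 0.
Proof. by case: hE => [_ [_ [[_ [_ [_ _ _ h _]]] _ _ _]]]; apply: h. Qed.

Lemma E_zero x : WV (@fnl0 R H) x <-> exists h, x = iota h.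
Proof. by case: hE => [_ [_ [[_ [_ [_ _ _ _ h]]] _ _ _]]]; apply: h. Qed.

Lemma E_EA3 : EA3 br fm iota A0.
Proof. by case: hE => [_ [_ [_ h _ _]]]. Qed.

Lemma br_iota h1 h2 : br (iota h1) (iota h2) = 0.
Proof.
have [_ w] : WV (@fnl0 R H) (iota h2) by apply/E_zero; exists h2.
by rewrite w scale0r.
Qed.

Lemma wv0 a : WV a 0.
Proof. by split=> // h; rewrite br0r scaler0. Qed.
Lemma wvD a x y : WV a x -> WV a y -> WV a (x + y).
Proof. by move=> [_ hx] [_ hy]; split=> // h; rewrite brDr hx hy scalerDr. Qed.
Lemma wvZ a k x : WV a x -> WV a (k *: x).
Proof. by move=> [_ hx]; split=> // h; rewrite brZr hx !scalerA mulrC. Qed.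
Lemma wv_sum a n (x : 'I_n -> V) : (forall i, WV a (x i)) -> WV a (\sum_(i < n) x i).
Proof.
move=> hx; elim/big_ind: _ => //; [exact: wv0| exact: wvD].
Qed.
Lemma wv_iota h : WV (@fnl0 R H) (iota h).
Proof. by apply/E_zero; exists h. Qed.

Lemma wv_br a b x y : WV a x -> WV b y -> WV (fnl_add a b) (br x y).
Proof.
move=> [_ hx] [_ hy]; split=> // h.
have := jacobi (iota h) x y.
rewrite (br_anti y (iota h)) hy hx brNr !brZr (br_anti y x) scalerN.
rewrite /fnl_add scalerDl.
move/eqP; rewrite -addrA addr_eq0 => /eqP ->.
by rewrite opprD !opprK addrC.
Qed.

Lemma fnl_neq0 (a : H -> C) : a <> @fnl0 R H -> exists h, a h <> 0.
Proof.
move=> na; apply: NNPP => nh; apply: na; apply: functional_extensionality => h.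
by apply: NNPP => nz; apply: nh; exists h.
Qed.

Lemma fm_weight a b x y : WV a x -> WV b y -> fnl_add a b <> @fnl0 R H -> fm x y = 0.
Proof.
move=> [_ hx] [_ hy] /fnl_neq0 [h nz].
have e1 : fm (br (iota h) x) y = a h * fm x y by rewrite hx fmZl.
have e2 : fm (br (iota h) x) y = - (b h * fm x y).
  by rewrite br_anti fmNl fm_inv hy fmZr.
move: e1; rewrite e2 => /eqP; rewrite eq_sym -subr_eq0 opprK -mulrDl mulf_eq0.
by case/orP => /eqP // E; exfalso; apply: nz; rewrite /fnl_add E.
Qed.

Lemma fm_iota_weight a x h : WV a x -> a <> @fnl0 R H -> fm (iota h) x = 0.
Proof.
move=> wx na; apply: (fm_weight (wv_iota h) wx) => E; apply: na.
apply: functional_extensionality => h'.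
by have := congr1 (fun f => f h') E; rewrite /fnl_add /fnl0 add0r.
Qed.

Lemma iota_nondeg h : (forall h', fm (iota h) (iota h') = 0) -> h = 0.
Proof.
move=> hh; apply: io_eq0; apply: fm_nondeg => v.
have [n [a [y [_ [wy ->]]]]] := E_decomp v.
rewrite fm_sumr big1 // => i _.
case: (wy i) => _ wyi.
case: (classic (a i = @fnl0 R H)) => [E|ne].
  by move: wyi; rewrite E => /E_zero [h' ->].
exact: fm_iota_weight wyi ne.
Qed.

End EFacts.

Section Riesz.
Variable R : realType.
Local Notation C := R[i].
Variables (V : lmodType C) (br : V -> V -> V) (fm : V -> V -> C).
Variables (H : vectType C) (iota : H -> V).
Hypothesis hE : is_EALA br fm iota (fun _ : V => True).

Lemma riesz (W : vectType C) (j : W -> V)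
  (jlin : forall k w1 w2, j (k *: w1 + w2) = k *: j w1 + j w2)
  (nd : forall w, (forall w', fm (j w) (j w') = 0) -> w = 0)
  (b : W -> C) (hb : is_lin_fnl b) :
  exists t, forall w, b w = fm (j w) (j t).
Proof.
pose n := \dim (fullv : {vspace W}).
pose e := vbasis (fullv : {vspace W}).
pose G : 'M[C]_n := \matrix_(k, l) fm (j e`_k) (j e`_l).
pose comb (c : 'rV[C]_n) := \sum_(k < n) c 0 k *: e`_k.
have GE c l : (c *m G) 0 l = fm (j (comb c)) (j e`_l).
  rewrite !mxE /comb (linf_sum jlin) (fm_suml hE); apply: eq_bigr => k _.
  by rewrite (linfZ jlin) (fmZl hE) mxE.
have expand w : w = \sum_(l < n) coord e l w *: e`_l := coord_vbasis (memvf w).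
have orth c : (forall l : 'I_n, fm (j (comb c)) (j e`_l) = 0) -> c = 0.
  move=> hc; have c0 : comb c = 0.
    move: (comb c) hc => s hs.
    apply: nd => w'; rewrite (expand w') (linf_sum jlin) (fm_sumr hE) big1 // => l _.
    by rewrite (linfZ jlin) (fmZr hE) hs mulr0.
  apply/rowP => k; rewrite mxE.
  have := (freeP (basis_free (vbasisP (fullv : {vspace W})))) (fun k => c 0 k) c0 k.
  by [].
have rf : row_free G.
  rewrite -kermx_eq0; apply/eqP/row_matrixP => i; rewrite row0; apply: orth => l.
  by rewrite -GE -row_mul mulmx_ker row0 mxE.
have GU : G \in unitmx by rewrite -row_free_unit.
pose beta : 'rV[C]_n := \row_l b e`_l.
pose c := beta *m invmx G.
have hc (l : 'I_n) : fm (j (comb c)) (j e`_l) = b e`_l by rewrite -GE mulmxKV // mxE.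
exists (comb c) => w; move: (comb c) hc => s hs.
rewrite (fmC hE) {1 2}(expand w) (fnl_sum hb) (linf_sum jlin) (fm_sumr hE).
apply: eq_bigr => l _.
by rewrite (fnlZ hb) (linfZ jlin) (fmZr hE) hs.
Qed.

End Riesz.

Lemma cs_aux (F : numFieldType) (p d : F) : d \is Num.real -> 0 < p ->
  (forall r, r \is Num.real -> 0 <= r ^+ 2 * p + 2 * r * d) -> d = 0.
Proof.
move=> dr p0 hr.
have pr : p \is Num.real by apply: gtr0_real.
have := hr (- d / p) (rpredM (rpredNr dr) (rpredVr pr)).
have -> : (- d / p) ^+ 2 * p + 2 * (- d / p) * d = - (d ^+ 2 / p).
  by field; rewrite gt_eqF.
rewrite oppr_ge0 => h1.
have h2 : 0 <= d ^+ 2 / p.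
  apply: divr_ge0; last exact: ltW. by rewrite -realEsqr.
have : d ^+ 2 / p == 0 by rewrite eq_le h1 h2.
rewrite mulf_eq0 invr_eq0 (gt_eqF p0) orbF sqrf_eq0 => /eqP; done.
Qed.

Section Cover.
Variable R : realType.
Local Notation C := R[i].
Variables (V : lmodType C) (br : V -> V -> V) (fm : V -> V -> C).
Variables (H : vectType C) (iota : H -> V).
Hypothesis hE : is_EALA br fm iota (fun _ : V => True).
Local Notation A0 := (fun _ : V => True).
Local Notation WV := (weight_vec br iota A0).
Variable R' : fnl_set H.
Hypothesis hR' : is_closed_subsystem fm iota R' (root_set br iota A0).

Lemma R'_sub a : R' a -> root_set br iota A0 a.
Proof. by case: hR' => [[h _] _]; apply: h. Qed.
Lemma R'_lin a : R' a -> is_lin_fnl a.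
Proof. by move/R'_sub => [h _]. Qed.
Lemma R'_0 : R' (@fnl0 R H).
Proof. by case: hR' => [[_ [_ [h _]]] _]. Qed.
Lemma R'_opp a : R' a -> R' (fnl_opp a).
Proof. by case: hR' => [[_ [_ [_ [h _]]]] _]; apply: h. Qed.
Lemma R'_disc : discrete_set R'.
Proof. by case: hR' => [[_ [_ [_ [_ [_ [h _]]]]]] _]. Qed.
Lemma R'_real a b c : in_real_span R' a -> in_real_span R' b -> fnl_form fm iota a b c -> c \is Num.real.
Proof. by case: hR' => [[_ [_ [_ [_ [_ [_ [h _ _ _]]]]]]] _] ha hb hc; case: (h a b c ha hb hc). Qed.
Lemma R'_psd a c : in_real_span R' a -> fnl_form fm iota a a c -> 0 <= c.
Proof. by case: hR' => [[_ [_ [_ [_ [_ [_ [_ h _ _]]]]]]] _]; apply: h. Qed.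
Lemma R'_noniso : isotropic_nonisolated fm iota R'.
Proof. by case: hR' => [[_ [_ [_ [_ [_ [_ [_ _ _ [h _]]]]]]]] _]. Qed.
Lemma R'_conn : connected_nonisotropic fm iota R'.
Proof. by case: hR' => [[_ [_ [_ [_ [_ [_ [_ _ _ [_ h]]]]]]]] _]. Qed.
Lemma R'_closed a b : R' a -> R' b -> root_set br iota A0 (fnl_add a b) -> R' (fnl_add a b).
Proof. by case: hR' => [_ h]; apply: h. Qed.

Lemma tvec_uniq a t1 t2 : is_tvec fm iota a t1 -> is_tvec fm iota a t2 -> t1 = t2.
Proof.
move=> h1 h2; apply/eqP; rewrite -subr_eq0; apply/eqP; apply: (iota_nondeg hE) => h.
by rewrite (fmC hE) (ioB hE) (fmBr hE) -h1 -h2 subrr.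
Qed.

Lemma tvec_ex a : is_lin_fnl a -> exists t, is_tvec fm iota a t.
Proof. exact: (riesz hE (io_lin hE) (iota_nondeg hE)). Qed.

Lemma fnl_formE a b ta tb c : is_tvec fm iota a ta -> is_tvec fm iota b tb ->
  (fnl_form fm iota a b c <-> c = fm (iota ta) (iota tb)).
Proof.
move=> ha hb; split.
  by move=> [ta' [tb' [ha' [hb' <-]]]]; rewrite (tvec_uniq ha' ha) (tvec_uniq hb' hb).
by move=> ->; exists ta, tb.
Qed.

Lemma nonisoE a ta : is_tvec fm iota a ta ->
  (nonisotropic fm iota a <-> fm (iota ta) (iota ta) <> 0).
Proof.
move=> ha; split.
  by move=> [c [/(fnl_formE c ha ha) -> nz]].
by move=> nz; exists (fm (iota ta) (iota ta)); split=> //; apply/(fnl_formE _ ha ha).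
Qed.

Lemma tvec_comb a b ta tb r : is_tvec fm iota a ta -> is_tvec fm iota b tb ->
  is_tvec fm iota (fun h => r * a h + b h) (r *: ta + tb).
Proof. by move=> ha hb h; rewrite (io_lin hE) (fm_linr hE) -ha -hb. Qed.

Lemma span1 a : R' a -> in_real_span R' a.
Proof.
move=> ha; exists 1%N, (fun _ => a), (fun _ => 1); split=> [i|]; first by split=> //; apply: rpred1.
by apply: functional_extensionality => h; rewrite big_ord1 mul1r.
Qed.

Lemma span2 a b r : R' a -> R' b -> r \is Num.real -> in_real_span R' (fun h => r * a h + b h).
Proof.
move=> ha hb hr; exists 2%N, (fun i : 'I_2 => if val i == 0%N then a else b),
  (fun i : 'I_2 => if val i == 0%N then r else 1); split.
  by move=> i; case: ifP => _; split=> //; apply: rpred1.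
by apply: functional_extensionality => h; rewrite !big_ord_recl big_ord0 /= mul1r addr0.
Qed.

Lemma R'_isotropic_orth s a ts ta : R' s -> R' a -> is_tvec fm iota s ts -> is_tvec fm iota a ta ->
  fm (iota ts) (iota ts) = 0 -> fm (iota ta) (iota ta) <> 0 -> fm (iota ta) (iota ts) = 0.
Proof.
move=> hs ha hts hta s0 a0.
have p0 : 0 <= fm (iota ta) (iota ta).
  apply: (R'_psd (span1 ha)); by apply/(fnl_formE _ hta hta).
have dr : fm (iota ta) (iota ts) \is Num.real.
  apply: (R'_real (span1 ha) (span1 hs)); by apply/(fnl_formE _ hta hts).
apply: (cs_aux (p := fm (iota ta) (iota ta)) dr); first by rewrite lt0r; apply/andP; split=> //; apply/eqP.
move=> r hr.
have := R'_psd (span2 ha hs hr) (iffRL (fnl_formE _ (tvec_comb r hta hts) (tvec_comb r hta hts)) erefl).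
rewrite (io_lin hE) (fm_linl hE) !(fm_linr hE) s0 addr0 (fmC hE (iota ts)).
by congr (0 <= _); ring.
Qed.


Variables (K : vectType C) (kap : K -> H).
Hypothesis kap_lin : forall k u1 u2, kap (k *: u1 + u2) = k *: kap u1 + kap u2.
Hypothesis kap_inj : injective kap.
Hypothesis tv_range : forall a t, R' a -> nonisotropic fm iota a -> is_tvec fm iota a t ->
  exists u, t = kap u.
Hypothesis nd_K : forall u, (forall u', fm (iota (kap u)) (iota (kap u')) = 0) -> u = 0.
Local Notation io' := (fun u => iota (kap u)).

Lemma io'_lin k u1 u2 : io' (k *: u1 + u2) = k *: io' u1 + io' u2.
Proof. by rewrite /= kap_lin (io_lin hE). Qed.

Lemma io'_inj : injective io'.
Proof. by move=> u1 u2 /= /(io_inj hE) /kap_inj. Qed.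

Lemma R'_tv a : R' a -> exists u, is_tvec fm iota a (kap u).
Proof.
move=> ha; have [ta hta] := tvec_ex (R'_lin ha).
case: (classic (nonisotropic fm iota a)) => na.
  by have [u e] := tv_range ha na hta; exists u; rewrite -e.
have [a' [ha' [na' hsum]]] := R'_noniso ha na.
have [ta' hta'] := tvec_ex (R'_lin ha').
have p0 := iffLR (nonisoE hta') na'.
have s0 : fm (iota ta) (iota ta) = 0.
  by apply: NNPP => nz; apply: na; apply/(nonisoE hta).
have d0 := R'_isotropic_orth ha ha' hta hta' s0 p0.
have hts : is_tvec fm iota (fnl_add a' a) (ta' + ta).
  by move=> h; rewrite /fnl_add (ioD hE) (fmDr hE) -hta' -hta.
have nsum : nonisotropic fm iota (fnl_add a' a).
  apply/(nonisoE hts); rewrite (ioD hE) !(fmDl hE) !(fmDr hE) s0 d0 (fmC hE (iota ta)) d0.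
  by rewrite !addr0.
have [u1 e1] := tv_range hsum nsum hts.
have [u2 e2] := tv_range ha' na' hta'.
exists (u1 - u2); rewrite (linfB kap_lin) -e1 -e2.
by rewrite addrC addKr.
Qed.

Definition tK (b : K -> C) : K :=
  match excluded_middle_informative
          (exists t, forall u, b u = fm (io' u) (io' t)) with
  | left h => proj1_sig (constructive_indefinite_description _ h)
  | right _ => 0
  end.

Lemma tK_uniq (b : K -> C) t1 t2 : (forall u, b u = fm (io' u) (io' t1)) ->
  (forall u, b u = fm (io' u) (io' t2)) -> t1 = t2.
Proof.
move=> h1 h2; apply/eqP; rewrite -subr_eq0; apply/eqP; apply: nd_K => u.
by rewrite (fmC hE) (linfB kap_lin) (ioB hE) (fmBr hE) -h1 -h2 subrr.
Qed.

Lemma tK_spec b : is_lin_fnl b -> forall u, b u = fm (io' u) (io' (tK b)).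
Proof.
move=> hb; rewrite /tK; case: excluded_middle_informative => [h|nh].
  by case: (constructive_indefinite_description _ h).
exfalso; apply: nh; exact: (riesz hE io'_lin nd_K hb).
Qed.

Lemma tK_eq b t : is_lin_fnl b -> (forall u, b u = fm (io' u) (io' t)) -> tK b = t.
Proof. by move=> hb ht; apply: tK_uniq (tK_spec hb) ht. Qed.

Definition ext (b : K -> C) : H -> C := fun h => fm (iota h) (iota (kap (tK b))).
Definition res (a : H -> C) : K -> C := fun u => a (kap u).

Lemma ext_lin b : is_lin_fnl (ext b).
Proof. by move=> k h1 h2; rewrite /ext (io_lin hE) (fm_linl hE). Qed.

Lemma res_lin a : is_lin_fnl a -> is_lin_fnl (res a).
Proof. by move=> ha k u1 u2; rewrite /res kap_lin ha. Qed.

Lemma ext_tvec b : is_tvec fm iota (ext b) (kap (tK b)).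
Proof. by []. Qed.

Lemma res_ext b : is_lin_fnl b -> res (ext b) = b.
Proof. by move=> hb; apply: functional_extensionality => u; rewrite /res /ext -tK_spec. Qed.

Lemma tK_res a u : is_tvec fm iota a (kap u) -> tK (res a) = u.
Proof.
move=> ha; apply: tK_eq; last by move=> u'; rewrite /res ha.
by move=> k u1 u2; rewrite /res !ha io'_lin (fm_linl hE).
Qed.

Lemma ext_res_tv a u : is_tvec fm iota a (kap u) -> ext (res a) = a.
Proof.
move=> ha; apply: functional_extensionality => h.
by rewrite /ext (tK_res ha) ha.
Qed.

Lemma ext_res a : R' a -> ext (res a) = a.
Proof. by move=> /R'_tv [u hu]; apply: ext_res_tv hu. Qed.

Lemma R'_tvK a : R' a -> is_tvec fm iota a (kap (tK (res a))).
Proof. by move=> ha; rewrite -{1}(ext_res ha). Qed.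

Lemma res_inj a a' : R' a -> R' a' -> res a = res a' -> a = a'.
Proof. by move=> ha ha' e; rewrite -(ext_res ha) -(ext_res ha') e. Qed.

Lemma fnl0_tv : is_tvec fm iota (@fnl0 R H) (kap 0).
Proof. by move=> h; rewrite (linf0 kap_lin) (io0 hE) (fm0r hE). Qed.

Lemma ext0 : ext (@fnl0 R K) = @fnl0 R H.
Proof. exact: (ext_res_tv fnl0_tv). Qed.

Lemma res_nz a : R' a -> a <> @fnl0 R H -> res a <> @fnl0 R K.
Proof. by move=> ha na e; apply: na; rewrite -(ext_res ha) e ext0. Qed.


Variable Hp : H -> Prop.
Hypothesis HpE : forall h, Hp h <-> exists u, h = kap u.
Local Notation A := (lie_cover br iota R' Hp).
Local Notation nzR a := (R' a /\ a <> @fnl0 R H).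

Lemma A_intro u n (a : 'I_n -> H -> C) y :
  (forall i, R' (a i) /\ a i <> @fnl0 R H /\ WV (a i) (y i)) -> A (io' u + \sum_(i < n) y i).
Proof. by move=> hy; exists (kap u), n, a, y; split=> //; apply/HpE; exists u. Qed.

Lemma A_elim x : A x -> exists u n (a : 'I_n -> H -> C) y,
  (forall i, R' (a i) /\ a i <> @fnl0 R H /\ WV (a i) (y i)) /\ x = io' u + \sum_(i < n) y i.
Proof.
move=> [h [n [a [y [hp [hy ->]]]]]]; have [u ->] := iffLR (HpE h) hp.
by exists u, n, a, y.
Qed.

Lemma A_iota u : A (io' u).
Proof.
have := @A_intro u 0 (fun _ => @fnl0 R H) (fun _ => 0); rewrite big_ord0 addr0; apply.
by case.
Qed.

Lemma io'0 : io' 0 = 0.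
Proof. by rewrite /= (linf0 kap_lin) (io0 hE). Qed.

Lemma A_0 : A 0.
Proof. by rewrite -io'0; apply: A_iota. Qed.

Lemma A_wv a y : R' a -> a <> @fnl0 R H -> WV a y -> A y.
Proof.
move=> ha na wy.
have -> : y = io' 0 + \sum_(i < 1) (fun _ => y) i by rewrite io'0 add0r big_ord1.
by apply: (@A_intro 0 1 (fun _ => a)).
Qed.

Lemma A_lin k x y : A x -> A y -> A (k *: x + y).
Proof.
move=> /A_elim [u [n [a [y1 [hy ->]]]]] /A_elim [u' [m [a' [y' [hy' ->]]]]].
have -> : k *: (io' u + \sum_(i < n) y1 i) + (io' u' + \sum_(i < m) y' i) =
  io' (k *: u + u') + \sum_(i < n + m) (match split i with inl i => k *: y1 i | inr j => y' j end).
  have e1 : \sum_(i < n) (match split (lshift m i) with inl i => k *: y1 i | inr j => y' j end)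
     = \sum_(i < n) k *: y1 i by apply: eq_bigr => i _; rewrite split_l.
  have e2 : \sum_(i < m) (match split (rshift n i) with inl i => k *: y1 i | inr j => y' j end)
     = \sum_(i < m) y' i by apply: eq_bigr => i _; rewrite split_r.
  rewrite big_split_ord /= e1 e2.
  rewrite kap_lin (io_lin hE) scalerDr scaler_sumr.
  by rewrite -!addrA; congr (_ + _); rewrite addrCA.
apply: (@A_intro _ _ (fun i => match split i with inl i => a i | inr j => a' j end)) => i.
case: (split i) => [i'|j]; last exact: hy'.
by case: (hy i') => h1 [h2 h3]; split=> //; split=> //; apply: (wvZ hE).
Qed.

Lemma A_add x y : A x -> A y -> A (x + y).
Proof. by move=> hx hy; rewrite -[x]scale1r; apply: A_lin. Qed.

Lemma A_scale k x : A x -> A (k *: x).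
Proof. by move=> hx; rewrite -[_ *: _]addr0; apply: A_lin => //; apply: A_0. Qed.

Lemma A_sum n (x : 'I_n -> V) : (forall i, A (x i)) -> A (\sum_(i < n) x i).
Proof. move=> hx; elim/big_ind: _ => //; [exact: A_0 | exact: A_add]. Qed.

Lemma br_wv_A a b x y : R' a -> a <> @fnl0 R H -> WV a x ->
  R' b -> b <> @fnl0 R H -> WV b y -> A (br x y).
Proof.
move=> ha na wx hb nb wy.
have wxy := wv_br hE wx wy.
case: (classic (fnl_add a b = @fnl0 R H)) => [e|ne].
  move: wxy; rewrite e => /(E_zero hE) [h eh].
  have ta := R'_tvK ha.
  suff e2 : h = kap (fm x y *: tK (res a)) by rewrite eh e2; apply: A_iota.
  apply/eqP; rewrite -subr_eq0; apply/eqP; apply: (iota_nondeg hE) => h'.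
  rewrite (linfZ kap_lin) (ioB hE) (fmBl hE) -eh (fmC hE (br x y)) -(fm_inv hE).
  case: wx => _ ->; rewrite (fmZl hE) (ioZ hE) (fmZl hE) (fmC hE (iota (kap _))) -ta.
  by rewrite mulrC subrr.
case: (classic (root_set br iota A0 (fnl_add a b))) => [rt|nrt].
  by apply: (A_wv (R'_closed ha hb rt) ne wxy).
suff -> : br x y = 0 by apply: A_0.
apply: NNPP => nz; apply: nrt; split; last by exists (br x y).
by move=> k h1 h2; rewrite /fnl_add (R'_lin ha) (R'_lin hb) mulrDr -!addrA; congr (_ + _); rewrite addrCA.
Qed.

Lemma A_br_iota u y : A y -> A (br (io' u) y).
Proof.
move=> /A_elim [u' [n [a [y1 [hy ->]]]]].
rewrite (brDr hE) (br_iota hE) add0r (br_sumr hE); apply: A_sum => i.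
case: (hy i) => h1 [h2 [_ h3]]; rewrite h3; apply: A_scale; apply: (A_wv h1 h2).
by case: (hy i) => _ [].
Qed.

Lemma A_br_wv a x y : R' a -> a <> @fnl0 R H -> WV a x -> A y -> A (br x y).
Proof.
move=> ha na wx /A_elim [u' [n [a' [y1 [hy ->]]]]].
rewrite (brDr hE) (br_sumr hE); apply: A_add.
  rewrite (br_anti hE); case: (wx) => _ ->; rewrite -scaleNr; apply: A_scale.
  exact: (A_wv ha na wx).
apply: A_sum => i; case: (hy i) => h1 [h2 h3]; exact: (br_wv_A ha na wx h1 h2 h3).
Qed.

Lemma A_br x y : A x -> A y -> A (br x y).
Proof.
move=> /A_elim [u [n [a [y1 [hy ->]]]]] hy'.
rewrite (brDl hE) (br_suml hE); apply: A_add; first exact: A_br_iota.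
by apply: A_sum => i; case: (hy i) => h1 [h2 h3]; apply: (A_br_wv h1 h2 h3).
Qed.


Lemma A_nf x : A x -> exists u n (a : 'I_n -> H -> C) y,
  (forall i j, a i = a j -> i = j) /\
  (forall i, R' (a i) /\ a i <> @fnl0 R H /\ WV (a i) (y i)) /\ x = io' u + \sum_(i < n) y i.
Proof.
move=> /A_elim [u [n [a [y [hy ->]]]]].
have [m [a' [y' [inj [hy' e]]]]] :=
  @regroup _ _ (fun a y => R' a /\ a <> @fnl0 R H /\ WV a y)
    (fun a y1 y2 h1 h2 => conj (proj1 h1) (conj (proj1 (proj2 h1)) (wvD hE (proj2 (proj2 h1)) (proj2 (proj2 h2))))) n a y hy.
by exists u, m, a', y'; rewrite e.
Qed.

Lemma fnl0_lin (W : vectType C) : is_lin_fnl (@fnl0 R W).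
Proof. by move=> k h1 h2; rewrite /fnl0 mulr0 addr0. Qed.

Lemma NF_indep n (a : 'I_n -> H -> C) y w :
  (forall i j, a i = a j -> i = j) ->
  (forall i, R' (a i) /\ a i <> @fnl0 R H /\ WV (a i) (y i)) ->
  WV (@fnl0 R H) w -> w + \sum_(i < n) y i = 0 -> w = 0 /\ forall i, y i = 0.
Proof.
move=> inj hy hw e.
have := @E_indep _ _ _ _ _ _ hE n.+1 (ocons (@fnl0 R H) a) (ocons w y).
rewrite ocons_sum; move/(_ _ _ e) => h.
have {}h : forall i, ocons w y i = 0.
  apply: h; first by apply: ocons_inj => // j; case: (hy j) => _ [].
  by elim/ocons_ind; [rewrite !ocons0; split=> //; apply: fnl0_lin
     | move=> j; rewrite !oconsS; case: (hy j) => h1 [_ h3]; split=> //; apply: R'_lin].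
split; first by have := h ord0; rewrite ocons0.
by move=> i; have := h (lift ord0 i); rewrite oconsS.
Qed.

Lemma wv_io' u : WV (@fnl0 R H) (io' u).
Proof. exact: (wv_iota hE). Qed.

Lemma scaler_eq0' (k : C) (x : V) : k *: x = 0 -> x <> 0 -> k = 0.
Proof. by move=> /eqP; rewrite scaler_eq0 => /orP [/eqP //|/eqP ->]. Qed.

Lemma A_weight x b : A x -> is_lin_fnl b -> (forall u, br (io' u) x = b u *: x) ->
  x = 0 \/ exists a, R' a /\ b = res a /\ WV a x.
Proof.
move=> /A_nf [u0 [n [a [y [inj [hy ex]]]]]] hb hx.
have F u : b u *: io' u0 = 0 /\ forall i, (a i (kap u) - b u) *: y i = 0.
  have P1 : forall i, R' (a i) /\ a i <> @fnl0 R H /\ WV (a i) ((a i (kap u) - b u) *: y i).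
    by move=> i; case: (hy i) => h1 [h2 h3]; split=> //; split=> //; apply: (wvZ hE).
  have P2 : WV (@fnl0 R H) (- (b u *: io' u0)).
    by rewrite -scaleNr; apply: (wvZ hE); apply: wv_io'.
  have P3 : - (b u *: io' u0) + \sum_(i < n) (a i (kap u) - b u) *: y i = 0.
    have e := hx u; rewrite ex (brDr hE) (br_iota hE) add0r (br_sumr hE) scalerDr scaler_sumr in e.
    have e' : \sum_(i < n) (a i (kap u) - b u) *: y i =
              \sum_(i < n) br (io' u) (y i) - \sum_(i < n) b u *: y i.
      by rewrite -sumrB; apply: eq_bigr => i _; case: (hy i) => _ [_ [_ ->]]; rewrite scalerBl.
    by rewrite e' e addrK addNr.
  have [w0 hy0] := @NF_indep n a (fun i => (a i (kap u) - b u) *: y i) (- (b u *: io' u0)) inj P1 P2 P3.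
  split=> //; by move/eqP: w0; rewrite oppr_eq0 => /eqP.
case: (classic (exists i, y i <> 0)) => [[i nzi]|ally].
  right; exists (a i); case: (hy i) => hai [nai wyi].
  have bE : b = res (a i).
    apply: functional_extensionality => u; case: (F u) => _ /(_ i) /scaler_eq0' /(_ nzi) /eqP.
    by rewrite subr_eq0 => /eqP <-.
  split=> //; split=> //; rewrite ex; apply: (wvD hE).
    case: (classic (io' u0 = 0)) => [->|nz]; first exact: (wv0 hE).
    exfalso; apply: (res_nz hai nai); rewrite -bE; apply: functional_extensionality => u.
    by case: (F u) => /scaler_eq0' /(_ nz).
  apply: (wv_sum hE) => k; case: (classic (y k = 0)) => [->|nzk]; first exact: (wv0 hE).
  have bk : b = res (a k).
    apply: functional_extensionality => u; case: (F u) => _ /(_ k) /scaler_eq0' /(_ nzk) /eqP.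
    by rewrite subr_eq0 => /eqP <-.
  case: (hy k) => hak [_ wyk].
  by rewrite (inj k i) //; apply: res_inj => //; rewrite -bE -bk.
have y0 : forall i, y i = 0 by move=> i; apply: NNPP => nz; apply: ally; exists i.
case: (classic (io' u0 = 0)) => [z|nz].
  by left; rewrite ex z add0r big1.
right; exists (@fnl0 R H); split; first exact: R'_0.
split.
  apply: functional_extensionality => u.
  by case: (F u) => /scaler_eq0' /(_ nz).
by rewrite ex big1 ?addr0 //; apply: wv_io'.
Qed.


Lemma A_weight_ext x b : A x -> is_lin_fnl b -> (forall u, br (io' u) x = b u *: x) -> WV (ext b) x.
Proof.
move=> hx hb hw; case: (A_weight hx hb hw) => [->|[a [ha [-> wa]]]]; first exact: (wv0 hE).
by rewrite (ext_res ha).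
Qed.

Local Notation WV' := (weight_vec br io' A).

Lemma cover_EA2 : EA2 br io' A.
Proof.
split; first exact: io'_lin.
split; first exact: io'_inj.
split.
- exact: A_iota.
- by move=> h1 h2; exists 0; rewrite io'0; apply: (br_iota hE).
- move=> x /A_nf [u0 [n [a [y [inj [hy ex]]]]]].
  have P : forall i, (fun b z => is_lin_fnl b /\ WV' b z)
     (ocons (@fnl0 R K) (fun i => res (a i)) i) (ocons (io' u0) y i).
    elim/ocons_ind => [|j]; rewrite ?ocons0 ?oconsS /=.
      split; first exact: fnl0_lin.
      by split; [apply: A_iota | move=> u; rewrite (br_iota hE) scale0r].
    case: (hy j) => h1 [h2 [_ h3]]; split; first exact: (res_lin (R'_lin h1)).
    by split; [apply: (A_wv h1 h2); split | move=> u; rewrite h3].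
  have [m [b [z [inj' [hz e]]]]] := @regroup _ _ (fun b z => is_lin_fnl b /\ WV' b z)
    (fun b z1 z2 h1 h2 => conj (proj1 h1) (conj (A_add (proj1 (proj2 h1)) (proj1 (proj2 h2)))
        (fun u => etrans (brDr hE _ _ _) (etrans (congr2 +%R (proj2 (proj2 h1) u) (proj2 (proj2 h2) u)) (esym (scalerDr _ _ _))))))
    _ _ _ P.
  exists m, b, z; split=> //; split=> //.
  by rewrite ex -e ocons_sum.
- move=> n b z inj hz e.
  have hz' : forall i, is_lin_fnl (ext (b i)) /\ WV (ext (b i)) (z i).
    move=> i; split; first exact: ext_lin.
    by case: (hz i) => hb [hA hw]; apply: A_weight_ext.
  apply: (E_indep hE _ hz' e) => i j eij; apply: inj.
  by rewrite -(res_ext (proj1 (hz i))) -(res_ext (proj1 (hz j))) eij.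
- move=> x; split.
    move=> [hA hw].
    case: (A_weight hA (fnl0_lin (W:=K)) hw) => [->|[a [ha [e0 wa]]]]; first by exists 0; rewrite io'0.
    have a0 : a = @fnl0 R H by rewrite -(ext_res ha) -e0 ext0.
    move: wa; rewrite a0 => /(E_zero hE) [h exh].
    have [u0 [n [a' [y [inj [hy ex]]]]]] := A_nf hA.
    have P2 : WV (@fnl0 R H) (io' u0 - iota h).
      by rewrite -scaleN1r; apply: (wvD hE (wv_io' u0) (wvZ hE (-1) (wv_iota hE h))).
    have P3 : (io' u0 - iota h) + \sum_(i < n) y i = 0.
      by rewrite addrAC -ex exh subrr.
    have [w0 _] := @NF_indep n a' y (io' u0 - iota h) inj hy P2 P3.
    by exists u0; rewrite exh; apply/eqP; rewrite eq_sym -subr_eq0 w0.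
  move=> [u ->]; split; first exact: A_iota.
  by move=> u'; rewrite (br_iota hE) scale0r.
Qed.


Lemma fnl_add_eq0 (a c : H -> C) : fnl_add a c = @fnl0 R H -> c = fnl_opp a.
Proof.
move=> e; apply: functional_extensionality => h.
have := congr1 (fun f => f h) e; rewrite /fnl_add /fnl0 /fnl_opp => /eqP.
by rewrite addrC addr_eq0 => /eqP.
Qed.

Lemma fnl_oppK (a : H -> C) : fnl_opp (fnl_opp a) = a.
Proof. by apply: functional_extensionality => h; rewrite /fnl_opp opprK. Qed.

Lemma cover_EA1 : EA1 br fm A.
Proof.
split.
- by move=> k x y z _ _ _; apply: (fm_linl hE).
- by move=> x y _ _; apply: (fmC hE).
- move=> x hx hxy.
  have [u0 [n [a [y [inj [hy ex]]]]]] := A_nf hx.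
  have u00 : u0 = 0.
    apply: nd_K => u'; have := hxy _ (A_iota u'); rewrite ex (fmDl hE) (fm_suml hE) big1 ?addr0 //.
    move=> i _; rewrite (fmC hE); case: (hy i) => _ [nai wi].
    exact: (fm_iota_weight hE _ wi nai).
  apply: (fm_nondeg hE) => v.
  have [m [c [w [_ [hw ->]]]]] := E_decomp hE v.
  rewrite (fm_sumr hE) big1 // => k _.
  case: (hw k) => _ wk.
  case: (classic (c k <> @fnl0 R H /\ R' (fnl_opp (c k)))) => [[nc hc]|no].
    apply: hxy; apply: (A_wv _ nc wk).
    by rewrite -(fnl_oppK (c k)); apply: R'_opp.
  rewrite ex u00 io'0 add0r (fm_suml hE) big1 // => i _.
  case: (hy i) => hai [nai wi].
  apply: (fm_weight hE wi wk) => e; apply: no.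
  have ce := fnl_add_eq0 e; split.
    move=> c0; apply: nai; rewrite -(fnl_oppK (a i)) -ce c0.
    by apply: functional_extensionality => h; rewrite /fnl_opp /fnl0 oppr0.
  by rewrite ce fnl_oppK.
- by move=> x y z _ _ _; apply: (fm_inv hE).
Qed.

Lemma cover_lie : is_lie_subalgebra br A.
Proof.
split; first exact: A_0.
split; first by move=> k x y; apply: A_lin.
split.
- exact: A_br.
- by move=> k x y z _ _ _; split; [apply: (br_linl hE) | apply: (br_linr hE)].
- by move=> x _; apply: (brxx hE).
- by move=> x y z _ _ _; apply: (jacobi hE).
Qed.

Lemma cover_EA3 : EA3 br fm io' A.
Proof.
move=> b x [hb _] [c [[ta [tb [hta [htb e]]]] nz]] [hA hw] y _.
have wx := A_weight_ext hA hb hw.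
case: (classic (x = 0)) => [->|nx].
  by exists 1%N; rewrite /= (br0l hE).
apply: (E_EA3 hE (a := ext b)) => //.
  by split; [apply: ext_lin | exists x].
exists c; split=> //.
exists (kap (tK b)), (kap (tK b)); split; first exact: ext_tvec.
split; first exact: ext_tvec.
by rewrite (tK_eq hb hta) -{2}(tK_eq hb hta) (tK_eq hb htb).
Qed.

Lemma K_nontriv : exists u, io' u <> 0.
Proof.
have fn : ~ nonisotropic fm iota (@fnl0 R H).
  by move/(nonisoE fnl0_tv); rewrite (linf0 kap_lin) (io0 hE) (fm0l hE).
have [a' [ha' [na' _]]] := R'_noniso R'_0 fn.
have [u hu] := R'_tv ha'.
exists u => z; move: na'; move/(nonisoE hu); rewrite /= in z; rewrite z (fm0l hE).
by [].
Qed.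

Lemma cover_roots b : root_set br io' A b <-> exists a, R' a /\ b = (fun u => a (kap u)).
Proof.
split.
  move=> [hb [x [[hA hw] nz]]].
  by case: (A_weight hA hb hw) => [//|[a [ha [-> _]]]]; exists a.
move=> [a [ha ->]]; split; first exact: (res_lin (R'_lin ha)).
case: (classic (a = @fnl0 R H)) => [->|na].
  have [u nu] := K_nontriv; exists (io' u); split=> //; split; first exact: A_iota.
  by move=> u'; rewrite (br_iota hE) /fnl0 scale0r.
have [_ [x [[_ wx] nz]]] := R'_sub ha.
exists x; split=> //; split; first by apply: (A_wv ha na); split.
by move=> u; rewrite wx.
Qed.


Local Notation nK := (\dim (fullv : {vspace K})).
Local Notation eK := (vbasis (fullv : {vspace K})).

Lemma coord_lin (j : 'I_nK) : is_lin_fnl (fun u : K => coord eK j u).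
Proof. by move=> k u1 u2; rewrite linearD linearZ. Qed.

Definition wK (j : 'I_nK) : K := tK (fun u => coord eK j u).

Lemma tK_expand b : is_lin_fnl b -> tK b = \sum_(j < nK) b eK`_j *: wK j.
Proof.
move=> hb; apply: tK_eq => // u.
rewrite (linf_sum kap_lin) (io_sum hE) (fm_sumr hE).
rewrite {1}(coord_vbasis (memvf u)) (fnl_sum hb); apply: eq_bigr => j _.
rewrite (fnlZ hb) (linfZ kap_lin) (ioZ hE) (fmZr hE) mulrC; congr (_ * _).
exact: (tK_spec (coord_lin j)).
Qed.

Definition Mj (j : 'I_nK) (h : H) : C := fm (iota h) (iota (kap (wK j))).

Lemma ext_expand b h : is_lin_fnl b -> ext b h = \sum_(j < nK) b eK`_j * Mj j h.
Proof.
move=> hb; rewrite /ext (tK_expand hb) (linf_sum kap_lin) (io_sum hE) (fm_sumr hE).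
by apply: eq_bigr => j _; rewrite (linfZ kap_lin) (ioZ hE) (fmZr hE).
Qed.

Lemma R'_diff a a1 h : R' a -> R' a1 ->
  a1 h - a h = \sum_(j < nK) (a1 (kap eK`_j) - a (kap eK`_j)) * Mj j h.
Proof.
move=> ha ha1.
rewrite -{1}(ext_res ha1) -{1}(ext_res ha).
rewrite (ext_expand _ (res_lin (R'_lin ha1))) (ext_expand _ (res_lin (R'_lin ha))) -sumrB.
by apply: eq_bigr => j _; rewrite mulrBl.
Qed.

Lemma cover_EA4 : EA4 br io' A.
Proof.
move=> b /cover_roots [a [ha ->]].
have [eps [eps0 heps]] := R'_disc ha.
pose nH := \dim (fullv : {vspace H}).
pose eH := vbasis (fullv : {vspace H}).
pose S := \sum_(i < nH) \sum_(j < nK) `|Mj j eH`_i|.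
have S0 : 0 <= S by apply: sumr_ge0 => i _; apply: sumr_ge0 => j _; apply: normr_ge0.
have S10 : 0 < S + 1 by apply: ltr_pwDr => //; apply: ltr01.
exists (eps / (S + 1)); split; first by apply: divr_gt0.
move=> b' /cover_roots [a1 [ha1 ->]] hclose.
suff -> : a1 = a by [].
apply: heps => // i.
have -> : a1 (tnth (vbasis fullv) i) - a (tnth (vbasis fullv) i) = a1 eH`_i - a eH`_i.
  by rewrite -!tnth_nth.
rewrite (R'_diff _ ha ha1).
apply: (le_lt_trans (ler_norm_sum _ _ _)).
apply: (@le_lt_trans _ _ (\sum_(j < nK) eps / (S + 1) * `|Mj j eH`_i|)).
  apply: ler_sum => j _; rewrite normrM; apply: ler_wpM2r; first exact: normr_ge0.
  have := hclose j; rewrite -!tnth_nth => /ltW; done.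
rewrite -mulr_sumr.
apply: (@le_lt_trans _ _ (eps / (S + 1) * S)).
  apply: ler_wpM2l; first by apply: ltW; apply: divr_gt0.
  rewrite /S (bigD1 i) //= lerDl; apply: sumr_ge0 => k _; apply: sumr_ge0 => j _; apply: normr_ge0.
rewrite mulrAC ltr_pdivrMr // ltr_pM2l //.
by apply: ltr_pwDr => //; apply: ltr01.
Qed.


Lemma fnl_formK b1 b2 c : is_lin_fnl b1 -> is_lin_fnl b2 ->
  (fnl_form fm io' b1 b2 c <-> c = fm (io' (tK b1)) (io' (tK b2))).
Proof.
move=> h1 h2; split.
  by move=> [ta [tb [hta [htb <-]]]]; rewrite (tK_eq h1 hta) (tK_eq h2 htb).
by move=> ->; exists (tK b1), (tK b2); split; [apply: tK_spec | split=> //; apply: tK_spec].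
Qed.

Lemma form_res a a' c : R' a -> R' a' ->
  (fnl_form fm io' (res a) (res a') c <-> fnl_form fm iota a a' c).
Proof.
move=> ha ha'.
rewrite (fnl_formK _ (res_lin (R'_lin ha)) (res_lin (R'_lin ha'))).
by rewrite (fnl_formE _ (R'_tvK ha) (R'_tvK ha')).
Qed.

Lemma noniso_res a : R' a -> (nonisotropic fm io' (res a) <-> nonisotropic fm iota a).
Proof.
move=> ha; split=> [[c [hc nz]]|[c [hc nz]]]; exists c; split=> //.
  by apply/(form_res _ ha ha).
by apply/(form_res _ ha ha).
Qed.

Lemma cover_EA5 : EA5 br fm io' A.
Proof.
split.
  move=> P Q hPQ [b1 hP] [b2 hQ] horth.
  apply: (R'_conn (P := fun a => R' a /\ P (res a)) (Q := fun a => R' a /\ Q (res a))).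
  - move=> a; split.
      move=> [ha na].
      have : root_set br io' A (res a) /\ nonisotropic fm io' (res a).
        by split; [apply/cover_roots; exists a | apply/noniso_res].
      by move/hPQ => [p|q]; [left|right].
    move=> hpq.
    have [ha hr] : R' a /\ (P (res a) \/ Q (res a)) by case: hpq => [[h p]|[h q]]; split=> //; [left|right].
    by have [_ /(noniso_res ha) na] := iffRL (hPQ (res a)) hr.
  - have [/cover_roots [a [ha e]] _] := iffRL (hPQ b1) (or_introl hP).
    by exists a; split=> //; rewrite /res -e.
  - have [/cover_roots [a [ha e]] _] := iffRL (hPQ b2) (or_intror hQ).
    by exists a; split=> //; rewrite /res -e.
  - move=> a a' [ha pa] [ha' qa']; have := horth _ _ pa qa'.
    by move/(form_res _ ha ha').
move=> s /cover_roots [s0 [hs0 ->]] ns.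
have ns0 : ~ nonisotropic fm iota s0 by move/(noniso_res hs0).
have [a [ha [na hsum]]] := R'_noniso hs0 ns0.
exists (res a); split; first by apply/cover_roots; exists a.
split; first by apply/noniso_res.
by apply/cover_roots; exists (fnl_add a s0).
Qed.

Theorem cover_main : is_EALA br fm io' A /\
  (forall b, root_set br io' A b <-> exists a, R' a /\ b = (fun u => a (kap u))).
Proof.
split; last exact: cover_roots.
split; first exact: cover_lie.
split; first exact: cover_EA1.
split; [exact: cover_EA2 | exact: cover_EA3 | exact: cover_EA4 | exact: cover_EA5].
Qed.

End Cover.

Unset Implicit Arguments.
Set Strict Implicit.

Theorem proposition4p3 (R : realType) (V : lmodType R[i])
  (br : V -> V -> V) (fm : V -> V -> R[i])
  (H : vectType R[i]) (iota : H -> V)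
  (hE : is_EALA br fm iota (fun _ : V => True))
  (hred : reduced_quotient fm iota (root_set br iota (fun _ : V => True)))
  (R' : fnl_set H) (H' : {vspace H})
  (hR' : is_closed_subsystem fm iota R' (root_set br iota (fun _ : V => True)))
  (hH' : is_cover fm iota R' H') :
  (is_EALA br fm (fun u : subvs_of H' => iota (vsval u))
     (lie_cover br iota R' (fun h => h \in H')) /\
   forall b : subvs_of H' -> R[i],
     root_set br (fun u : subvs_of H' => iota (vsval u))
       (lie_cover br iota R' (fun h => h \in H')) b <->
     exists a, R' a /\ b = (fun u => a (vsval u))) /\
  (is_EALA br fm iota (lie_cover br iota R' (fun _ : H => True)) /\
   forall b : H -> R[i],
     root_set br iota (lie_cover br iota R' (fun _ : H => True)) b <-> R' b).
Proof.
case: hH' => hcov hnd.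
split.
  apply: (@cover_main R V br fm H iota hE R' hR' (subvs_of H') vsval).
  - by move=> k u1 u2; rewrite linearD linearZ.
  - exact: subvs_inj.
  - move=> a t ha na ht; have tH := hcov a t ha na ht.
    by exists (vsproj H' t); rewrite vsprojK.
  - move=> u hu; apply: subvs_inj; rewrite linear0.
    apply: (hnd _ (subvsP u)) => h' hh'.
    by have := hu (vsproj H' h'); rewrite vsprojK.
  - move=> h; split; first by move=> hh; exists (vsproj H' h); rewrite vsprojK.
    by move=> [u ->]; apply: subvsP.
have [h1 h2] := @cover_main R V br fm H iota hE R' hR' H (fun h => h)
  (fun k u1 u2 => erefl) (fun x y e => e)
  (fun a t _ _ _ => ex_intro _ t erefl) (iota_nondeg hE) (fun _ => True)
  (fun h => conj (fun _ => ex_intro _ h erefl) (fun _ => I)).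
split; first exact: h1.
move=> b; rewrite h2; split.
  by move=> [a [ha ->]].
by move=> hb; exists b.
Qed.
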